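(* Let $n\geq 2$, $1\leq k\leq n-1$, and $q=p^h$ with $p>5$ prime and $h\geq 1$. Let $B$ be a minimal $k$-blocking set in $\mathrm{PG}(n,q)$ such that every $(n-k)$-dimensional subspace of $\mathrm{PG}(n,q)$ meets $B$ in $1 \pmod p$ points. If $\theta_k<|B|<2q^k$, then \[ |B| < \frac{3(q^k-q^k/p)}{2}. \]
   Context: $\mathrm{PG}(n,q)$ is the $n$-dimensional projective space over $\mathbb{F}_q$, and $\theta_m=(q^{m+1}-1)/(q-1)$ is the number of points of $\mathrm{PG}(m,q)$. A $k$-blocking set of $\mathrm{PG}(n,q)$ is a set $K$ of points such that every $(n-k)$-dimensional subspace meets $K$. A point $P\in K$ is essential if some $(n-k)$-dimensional subspace meets $K$ exactly in $P$; $K$ is minimal if every point of $K$ is essential (equivalently, no proper subset of $K$ is a $k$-blocking set). *)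

(* Defs.v *)
(* PG(n,q) modelled via the row spaces of F^(n+1), F a finite field. *)
From HB Require Import structures.
From mathcomp Require Import all_boot all_order all_algebra.
Set Implicit Arguments. Unset Strict Implicit. Unset Printing Implicit Defensive.
Import GRing.Theory Num.Theory.

Local Open Scope ring_scope.

Section PG.
Variables (F : finFieldType) (n : nat).

(* A point of PG(n,F) is a 1-dimensional subspace of F^(n+1), represented
   canonically by the square matrix <<X>> (genmx) of rank 1. *)
Definition is_point (X : 'M[F]_(n.+1)) : bool :=
  (X == <<X>>%MS) && (\rank X == 1)%N.

(* An m-dimensional projective subspace is the row space of a matrix of rank m+1. *)
Definition is_proj_subspace (m : nat) (S : 'M[F]_(n.+1)) : bool :=
  \rank S == m.+1.

Definition meet (K : {set 'M[F]_(n.+1)}) (S : 'M[F]_(n.+1)) : {set 'M[F]_(n.+1)} :=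
  [set P in K | (P <= S)%MS].

Definition point_set (K : {set 'M[F]_(n.+1)}) : Prop :=
  forall P, P \in K -> is_point P.

Definition blocking_set (k : nat) (K : {set 'M[F]_(n.+1)}) : Prop :=
  point_set K /\
  forall S, is_proj_subspace (n - k) S -> meet K S != set0.

Definition essential (k : nat) (K : {set 'M[F]_(n.+1)}) (P : 'M[F]_(n.+1)) : Prop :=
  exists S, is_proj_subspace (n - k) S /\ meet K S = [set P].

Definition minimal_blocking_set (k : nat) (K : {set 'M[F]_(n.+1)}) : Prop :=
  blocking_set k K /\ forall P, P \in K -> essential k K P.

End PG.

(* theta_m = (q^(m+1)-1)/(q-1) = 1 + q + ... + q^m *)
Definition theta (q m : nat) : nat := \sum_(i < m.+1) q ^ i.

(* Main.v *)
Require Import Defs.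
From HB Require Import structures.
From mathcomp Require Import all_boot all_order all_algebra.
From mathcomp Require Import ring lra zify.
Set Implicit Arguments. Unset Strict Implicit. Unset Printing Implicit Defensive.
Import Order.TTheory GRing.Theory Num.Theory.
Local Open Scope ring_scope.

Section Pts.
Variables (F : finFieldType) (n : nat).
Local Notation N := n.+1.

Lemma point_sub (P : 'M[F]_N) (v : 'rV[F]_N) :
  is_point P -> v != 0 -> (v <= P)%MS = (P == <<v>>%MS).
Proof.
case/andP=> /eqP eP /eqP rP nz; apply/idP/eqP => [sv|->]; last by rewrite genmxE.
have: (v == P)%MS by rewrite -(mxrank_leqif_eq sv).2 rP rank_rV nz.
by move/genmxP => ->.
Qed.

Lemma gen_point (v : 'rV[F]_N) : v != 0 -> is_point <<v>>%MS.
Proof. by move=> nz; rewrite /is_point genmx_id eqxx /= genmxE rank_rV nz. Qed.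

Lemma card_subv m (S : 'M[F]_(m, N)) :
  #|[set v : 'rV[F]_N | (v <= S)%MS]| = (#|F| ^ \rank S)%N.
Proof.
have ->: [set v : 'rV[F]_N | (v <= S)%MS] =
   (fun w : 'rV[F]_(\rank S) => w *m row_base S) @: setT.
  apply/setP=> v; rewrite inE; apply/idP/imsetP => [sv|[w _ ->]].
    have: (v <= row_base S)%MS by rewrite eq_row_base.
    by case/submxP => D ->; exists D.
  by rewrite -(eq_row_base S) submxMl.
rewrite card_imset; last exact: row_free_inj (row_base_free S).
by rewrite cardsT card_mx mul1n.
Qed.

End Pts.

Lemma sum_ind (T : finType) (A : {set T}) (Q : pred T) :
  (\sum_(x in A) (Q x : nat) = #|[set x in A | Q x]|)%N.
Proof.
rewrite (eq_bigr (fun x => if Q x then 1 else 0)%N); last by move=> x _; case: (Q x).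
rewrite -big_mkcondr sum1_card; apply: eq_card => x; by rewrite !inE.
Qed.

Section Pts2.
Variables (F : finFieldType) (n : nat).
Local Notation N := n.+1.

Definition ptsIn m (S : 'M[F]_(m, N)) := [set P : 'M[F]_N | is_point P & (P <= S)%MS].

Lemma card_nz_sub m (S : 'M[F]_(m, N)) :
  #|[set v : 'rV[F]_N | (v <= S)%MS & v != 0]| = (#|F| ^ \rank S - 1)%N.
Proof.
rewrite -card_subv (cardsD1 0 [set v : 'rV[F]_N | (v <= S)%MS]) inE sub0mx add1n subSS subn0.
by apply: eq_card => v; rewrite !inE andbC.
Qed.

Lemma card_ptsIn m (S : 'M[F]_(m, N)) :
  (#|ptsIn S| * (#|F| - 1) = #|F| ^ \rank S - 1)%N.
Proof.
rewrite -card_nz_sub -[#|[set v : 'rV[F]_N | _]|]sum1_card.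
rewrite (eq_bigr (fun v => \sum_(P in ptsIn S) ((v <= P)%MS : nat))%N); last first.
  move=> v; rewrite inE => /andP[sv nz].
  rewrite (bigD1 <<v>>%MS) /=; last by rewrite inE (gen_point nz) genmxE.
  rewrite genmxE submx_refl big1 // => P /andP[]; rewrite inE => /andP[pP _] neq.
  by rewrite point_sub // (negPf neq).
rewrite exchange_big /= -sum_nat_const.
apply: eq_bigr => P; rewrite inE => /andP[pP sP].
rewrite sum_ind.
have rP : \rank P = 1%N by case/andP: pP => _ /eqP.
have := card_nz_sub P; rewrite rP expn1 => <-.
apply: eq_card => v; rewrite !inE.
by case: (boolP (v <= P)%MS) => svP; rewrite ?andbF ?andbT // (submx_trans svP sP).
Qed.

End Pts2.

Section Frame.
Variables (F : finFieldType) (n' : nat).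
Local Notation N := n'.+2.

Definition j0 : 'I_N := lshift n' (lshift 1 (ord0 : 'I_1)).
Definition j1 : 'I_N := lshift n' (rshift 1 (ord0 : 'I_1)).

Lemma point_nz (P : 'M[F]_N) : is_point P -> nz_row P != 0.
Proof.
case/andP=> _ /eqP rP; rewrite nz_row_eq0 -mxrank_eq0 rP //.
Qed.

Lemma point_gen (P : 'M[F]_N) : is_point P -> P = <<nz_row P>>%MS.
Proof. by move=> pP; apply/eqP; rewrite -point_sub ?nz_row_sub ?point_nz. Qed.

Lemma pair_frame (P Q : 'M[F]_N) : is_point P -> is_point Q -> P != Q ->
  exists M : 'M[F]_N, [/\ M \in unitmx, P = <<row j0 M>>%MS & Q = <<row j1 M>>%MS].
Proof.
move=> pP pQ nPQ.
set u := nz_row P; set v := nz_row Q.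
have uP := point_gen pP; have vQ := point_gen pQ.
have nvu : ~~ (v <= u)%MS.
  apply/negP => svu; move: nPQ; rewrite vQ.
  have svP : (v <= P)%MS by rewrite (submx_trans svu) ?nz_row_sub.
  by rewrite (point_sub pP (point_nz pQ)) in svP; rewrite (eqP svP) eqxx.
set U := col_mx u v.
have rU : \rank U = 2%N.
  apply/eqP; rewrite eqn_leq rank_leq_row /=.
  have ru : \rank u = 1%N by rewrite rank_rV point_nz.
  have lt : (\rank u < \rank (u + v)%MS)%N.
    apply: rank_ltmx; rewrite ltmxE addsmxSl /=.
    by apply: contra nvu; apply: submx_trans; rewrite addsmxSr.
  by move: lt; rewrite ru addsmxE.
have eC : \rank U^C%MS = n'.
  by rewrite mxrank_compl rU subSS subSS subn0.
set W := castmx (eC, erefl N) (row_base U^C%MS).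
set M := col_mx U W.
have Mfull : row_full M.
  have ->: row_full M = row_full (U + U^C)%MS.
    apply: eq_row_full; apply: eqmx_trans (eqmx_sym (addsmxE _ _)) _.
    apply: adds_eqmx => //; exact: eqmx_trans (eqmx_cast _ _) (eq_row_base _).
  exact: addsmx_compl_full.
exists M; split.
- by rewrite -row_full_unit.
- rewrite /j0 /M (rowKu (lshift 1 (ord0 : 'I_1)) U W) (rowKu (ord0 : 'I_1) u v) row_id //.
- rewrite /j1 /M (rowKu (rshift 1 (ord0 : 'I_1)) U W) (rowKd (ord0 : 'I_1) u v) row_id //.
Qed.

End Frame.

Section Const.
Variables (F : finFieldType) (n' : nat).
Local Notation N := n'.+2.

Definition c2set (r : nat) m1 m2 (P : 'M[F]_(m1, N)) (Q : 'M[F]_(m2, N)) :=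
  [set S : 'M[F]_N | [&& \rank S == r, (P <= S)%MS & (Q <= S)%MS]].

Lemma c2_const (r : nat) (P Q : 'M[F]_N) : is_point P -> is_point Q -> P != Q ->
  #|c2set r P Q| = #|c2set r (row (j0 n') 1%:M) (row (j1 n') 1%:M)|.
Proof.
move=> pP pQ nPQ; have [M [uM eP eQ]] := pair_frame pP pQ nPQ.
have iM : invmx M \in unitmx by rewrite unitmx_inv.
have key S j : (row j 1%:M <= S *m invmx M)%MS = (row j M <= S)%MS.
  by rewrite -(submxMfree _ _ (_ : row_free M)) ?row_free_unit // mulmxKV // -row_mul mul1mx.
have rk S : \rank (S *m invmx M) = \rank S by rewrite mxrankMfree ?row_free_unit.
have eS S : ((P <= S)%MS = (row (j0 n') M <= S)%MS) * ((Q <= S)%MS = (row (j1 n') M <= S)%MS).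
  by rewrite eP eQ !genmxE.
have ->: c2set r (row (j0 n') 1%:M) (row (j1 n') 1%:M) = (fun S => S *m invmx M) @: c2set r P Q.
  apply/setP=> S; rewrite inE; apply/idP/imsetP.
    move=> /and3P[rS s0 s1]; exists (S *m M); last by rewrite mulmxK.
    by rewrite inE -rk mulmxK // rS !eS -!key !mulmxK // s0 s1.
  by move=> [T]; rewrite inE => /and3P[rT s0 s1] ->; rewrite rk rT !key -!eS s0 s1.
rewrite card_imset //; apply: can_inj (fun S => S *m M) _ => S; exact: mulmxKV.
Qed.

End Const.

Section DC.
Variables (F : finFieldType) (n' : nat) (r : nat).
Local Notation N := n'.+2.
Local Notation MN := 'M[F]_N.

Definition Ss := [set S : MN | \rank S == r].
Definition cc := #|c2set r (row (j0 n') (1%:M : MN)) (row (j1 n') (1%:M : MN))|.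

Definition ind (S P Q : MN) : nat := [&& P != Q, (P <= S)%MS & (Q <= S)%MS].

Lemma inner (T1 T2 : {set MN}) (S : MN) : T1 \subset T2 ->
  (\sum_(P in T1) \sum_(Q in T2) ind S P Q =
   #|[set P in T1 | (P <= S)%MS]| * (#|[set Q in T2 | (Q <= S)%MS]| - 1))%N.
Proof.
move=> sT.
rewrite (eq_bigr (fun P => if (P <= S)%MS then
   (#|[set Q in T2 | (Q <= S)%MS]| - 1)%N else 0%N)); last first.
  move=> P PT1; case: ifP => sPS; last first.
    by rewrite big1 // => Q _; rewrite /ind sPS andbF.
  rewrite (eq_bigr (fun Q => ((Q <= S)%MS && (Q != P) : nat))); last first.
    by move=> Q _; rewrite /ind sPS eq_sym andbC.
  rewrite sum_ind (cardsD1 P [set Q in T2 | (Q <= S)%MS]) inE (subsetP sT _ PT1) sPS.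
  rewrite add1n subSS subn0; apply: eq_card => Q; rewrite !inE.
  by case: (Q == P); rewrite /= ?andbF ?andbT. 
rewrite -big_mkcondr sum_nat_const; congr (_ * _)%N; apply: eq_card => P.
by rewrite !inE.
Qed.

Lemma dc (T1 T2 : {set MN}) : (forall P, P \in T1 -> is_point P) ->
  (forall P, P \in T2 -> is_point P) ->
  (\sum_(S in Ss) \sum_(P in T1) \sum_(Q in T2) ind S P Q =
   \sum_(P in T1) \sum_(Q in T2) ((P != Q) * cc))%N.
Proof.
move=> h1 h2.
rewrite exchange_big; apply: eq_bigr => P PT1.
rewrite exchange_big; apply: eq_bigr => Q QT2.
case: (eqVneq P Q) => [->|nPQ].
  by rewrite big1 // => S _; rewrite /ind eqxx.
rewrite mul1n /cc -(c2_const r (h1 _ PT1) (h2 _ QT2) nPQ) sum_ind.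
by apply: eq_card => S; rewrite !inE /ind nPQ.
Qed.

End DC.

Lemma fin3 (b Q p : rat) : 7 <= p -> 1 <= Q -> b < 2 * Q ->
  3 * (p - 1) * Q <= 2 * p * b ->
  (p + 1) * Q * (b - 49 * Q / 48) <= b * (b - 1) -> False.
Proof.
move=> p7 Q1 b2 b0 h.
have b0' : 0 <= b by nra.
have h2 : (2 * Q - b) * (2 * p * b - 3 * (p - 1) * Q) >= 0.
  apply: mulr_ge0; lra.
have h3 : 0 <= (48 * (2 * p - 3) * (p - 1) * Q) * (2 * p * b - 3 * (p - 1) * Q).
  apply: mulr_ge0; last lra.
  apply: mulr_ge0; last lra.
  apply: mulr_ge0; lra.
have h4 : 0 < (46 * p ^+ 3 - 314 * p ^+ 2 + 288 * p - 216).
  have -> : 46 * p ^+ 3 - 314 * p ^+ 2 + 288 * p - 216 =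
     (p - 7) * ((p - 7) * (46 * (p - 7) + 652) + 2654) + 2192 by ring.
  have : 0 <= (p - 7) * ((p - 7) * (46 * (p - 7) + 652) + 2654).
    apply: mulr_ge0; first lra.
    have : 0 <= (p - 7) * (46 * (p - 7) + 652) by apply: mulr_ge0; lra.
    lra.
  lra.
have hQ : 0 < Q ^+ 2 * (46 * p ^+ 3 - 314 * p ^+ 2 + 288 * p - 216).
  apply: mulr_gt0; [apply: exprn_gt0; lra | exact: h4].
have hpb : 0 <= p * b by apply: mulr_ge0; lra.
have E : 2 * p * 48 * (b * (b - 1) - (p + 1) * Q * (b - 49 * Q / 48)) >= 0.
  apply: mulr_ge0; lra.
nra.
Qed.

Lemma fin2 (b Q p D T : rat) : 7 <= p -> 1 <= Q -> 1 < D -> 0 <= b ->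
  Q * (D - 1) <= T - 1 -> 48 * T <= 49 * Q * D -> b < 2 * Q ->
  0 <= b * (b - 1) * D * (D - 1) - (p + 1) * b * (T - 1) * D + (p + 1) * T * (T - 1) ->
  b < 3 * (Q - Q / p) / 2.
Proof.
move=> p7 Q1 D1 b0 hA hC b2 G.
rewrite ltNge; apply/negP => hb.
have pp : 0 < p by lra.
have hb' : 3 * (p - 1) * Q <= 2 * p * b.
  have e : 3 * (Q - Q / p) / 2 = (3 * (p - 1) * Q) / (2 * p).
    by field; lra.
  by move: hb; rewrite e ler_pdivrMr; [lra | lra].
apply: (@fin3 b Q p p7 Q1 b2 hb').
have h49 : 49 * Q < 48 * b.
  have q1 : 0 < Q * (46 * p - 144) by apply: mulr_gt0; lra.
  have : 2 * p * (49 * Q) < 2 * p * (48 * b) by lra.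
  by rewrite ltr_pM2l //; lra.
have bDT : 0 < b * D - T.
  have : 0 < (48 * b - 49 * Q) * D by apply: mulr_gt0; lra.
  lra.
have G1 : (p + 1) * (T - 1) * (b * D - T) <= b * (b - 1) * D * (D - 1).
  have e : b * (b - 1) * D * (D - 1) - (p + 1) * (T - 1) * (b * D - T) =
     b * (b - 1) * D * (D - 1) - (p + 1) * b * (T - 1) * D + (p + 1) * T * (T - 1).
    by ring.
  by rewrite -subr_ge0 e.
have G2 : (p + 1) * (Q * (D - 1)) * (b * D - T) <= (p + 1) * (T - 1) * (b * D - T).
  have pp1 : 0 < p + 1 by lra.
  rewrite (ler_pM2r bDT) (ler_pM2l pp1); lra.
have G3 : ((p + 1) * Q * (b * D - T)) * (D - 1) <= (b * (b - 1) * D) * (D - 1).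
  have := le_trans G2 G1. congr (_ <= _); ring.
rewrite ler_pM2r in G3; last lra.
have G4 : ((p + 1) * Q * (b - 49 * Q / 48)) * D <= (b * (b - 1)) * D.
  apply: le_trans G3; rewrite -mulrA ler_pM2l; last by apply: mulr_gt0; lra.
  lra.
by rewrite ler_pM2r in G4; last lra.
Qed.

Section Main.
Variables (F : finFieldType) (n' : nat) (r : nat).
Local Notation N := n'.+2.
Local Notation MN := 'M[F]_N.

Lemma rhs_sum (T1 T2 : {set MN}) (c : nat) : T1 \subset T2 ->
  (\sum_(P in T1) \sum_(Q in T2) ((P != Q) * c) = #|T1| * (#|T2| - 1) * c)%N.
Proof.
move=> sT.
rewrite (eq_bigr (fun P => (\sum_(Q in T2) ind 1%:M P Q) * c)%N); last first.
  move=> P _; rewrite big_distrl; apply: eq_bigr => Q _.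
  by rewrite /ind !submx1 !andbT.
rewrite -big_distrl inner //; congr (_ * (_ - 1) * _)%N; apply: eq_card => P;
  by rewrite !inE submx1 andbT.
Qed.

Lemma cc_pos : (2 <= r)%N -> (r <= N)%N -> (0 < cc F n' r)%N.
Proof.
move=> r2 rN; apply/card_gt0P; exists (pid_mx r); rewrite inE.
rewrite rank_pid_mx // eqxx /=.
have rowpid (j : 'I_N) : (j < r)%N -> row j (1%:M : MN) = row j (pid_mx r).
  move=> jr; apply/rowP => i; rewrite !mxE jr andbT.
  by rewrite (inj_eq val_inj).
rewrite !rowpid ?row_sub //.
by apply: leq_trans r2.
Qed.

End Main.

Lemma natm1 (a : nat) : ((a * (a - 1))%N%:R : rat) = a%:R * (a%:R - 1).
Proof.
case: a => [|a]; first by rewrite mul0n !mul0r.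
by rewrite subSS subn0 natrM -addn1 natrD addrK.
Qed.

Lemma term_ge0 (i p : nat) : (1 < p)%N -> i = 1 %[mod p] ->
  0 <= ((i%:R - 1) * (i%:R - 1 - p%:R) : rat).
Proof.
move=> p1 hi.
have e : i = (i %/ p * p + 1)%N by rewrite {1}(divn_eq i p) hi modn_small.
set j := (i %/ p)%N in e; rewrite e natrD natrM addrK.
have -> : (j%:R * p%:R - p%:R : rat) = (j%:R - 1) * p%:R by ring.
case: j {e} => [|j]; first by rewrite !mul0r.
rewrite -addn1 natrD addrK -natrD -!natrM; exact: ler0n.
Qed.

Theorem mainTheorem1 (F : finFieldType) (p h n k : nat)
  (Hp : prime p) (Hp5 : (5 < p)%N) (Hh : (1 <= h)%N) (HF : #|F| = (p ^ h)%N)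
  (Hn : (2 <= n)%N) (Hk1 : (1 <= k)%N) (Hk2 : (k <= n - 1)%N)
  (B : {set 'M[F]_(n.+1)})
  (HB : minimal_blocking_set k B)
  (Hmod : forall S : 'M[F]_(n.+1), is_proj_subspace (n - k) S ->
            #|meet B S| = 1 %[mod p])
  (Hlow : (theta #|F| k < #|B|)%N) (Hup : (#|B| < 2 * #|F| ^ k)%N) :
  (#|B|%:R < (3 * ((#|F| ^ k)%:R - (#|F| ^ k)%:R / p%:R)) / 2 :> rat)%R.
Proof.
case: n Hn Hk2 B HB Hmod Hlow Hup => [//|n'] Hn Hk2 B HB Hmod Hlow Hup.
have Bpts : forall P, P \in B -> is_point P := HB.1.1.
set q := #|F| in HF Hlow Hup *.
set r := (n'.+1 - k).+1.
have p7 : (7 <= p)%N.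
  have : p != 6%N by apply/eqP => e; move: Hp; rewrite e.
  lia.
have qp : (p <= q)%N by rewrite HF -{1}(expn1 p) leq_pexp2l //; lia.
have q7 : (7 <= q)%N by lia.
have r2 : (2 <= r)%N by rewrite /r; lia.
have rN : (r <= n'.+2)%N by rewrite /r; lia.
have Nrk : n'.+2 = (r + k)%N by rewrite /r; lia.
have q1 : (0 < q - 1)%N by lia.
have p1 : (1 < p)%N by lia.
have qk1 : (0 < q ^ k)%N by rewrite expn_gt0; lia.
have qq : (q * q <= q ^ r)%N by rewrite mulnn leq_pexp2l //; lia.
have qr49 : (49 <= q ^ r)%N by nia.
pose pts := [set P : 'M[F]_(n'.+2) | is_point P].
pose D := #|ptsIn (pid_mx r : 'M[F]_(n'.+2))|.
have rpid : \rank (pid_mx r : 'M[F]_(n'.+2)) = r by rewrite rank_pid_mx.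
have eD : (D * (q - 1) = q ^ r - 1)%N by rewrite card_ptsIn rpid.
have hD : forall S : 'M[F]_(n'.+2), \rank S = r -> #|ptsIn S| = D.
  move=> S rS; apply/eqP; rewrite -(eqn_pmul2r q1) card_ptsIn eD rS //.
pose T := #|pts|.
have eT : (T * (q - 1) = q ^ r * q ^ k - 1)%N.
  rewrite -expnD -Nrk -(mxrank1 F n'.+2) -card_ptsIn; congr (_ * _)%N.
  by apply: eq_card => P; rewrite !inE submx1 andbT.
pose X := #|Ss F n' r|.
pose c := cc F n' r.
have c0 : (0 < c)%N by apply: cc_pos.
pose iS (S : 'M[F]_(n'.+2)) := #|meet B S|.
have ptsP : forall P, P \in pts -> is_point P by move=> P; rewrite inE.
have sB : B \subset pts by apply/subsetP => P /Bpts; rewrite inE.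
have E1 : (X * (D * (D - 1)) = T * (T - 1) * c)%N.
  have := dc r ptsP ptsP; rewrite rhs_sum // -/c -/T.
  rewrite (eq_bigr (fun S => D * (D - 1))%N) ?sum_nat_const // => S.
  rewrite inE => /eqP rS; rewrite inner // -(hD S rS).
  by have -> : [set P in pts | (P <= S)%MS] = ptsIn S by apply/setP => P; rewrite !inE.
have E2 : ((\sum_(S in Ss F n' r) iS S) * (D - 1) = #|B| * (T - 1) * c)%N.
  have := dc r Bpts ptsP; rewrite rhs_sum // -/c -/T big_distrl /=.
  move=> <-; apply: eq_bigr => S; rewrite inE => /eqP rS; rewrite inner //.
  rewrite -(hD S rS).
  by have -> : [set P in pts | (P <= S)%MS] = ptsIn S by apply/setP => P; rewrite !inE.
have E3 : (\sum_(S in Ss F n' r) (iS S * (iS S - 1)) = #|B| * (#|B| - 1) * c)%N.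
  have := dc r Bpts Bpts; rewrite rhs_sum // -/c.
  by move=> <-; apply: eq_bigr => S _; rewrite inner.
have Smod : forall S, S \in Ss F n' r -> iS S = 1 %[mod p].
  by move=> S; rewrite inE => rS; apply: Hmod.
have D2 : (2 <= D)%N by clear -eD qq q7; nia.
have T1 : (1 <= T)%N.
  clear -eT qk1 qr49; nia.
have b1 : (1 <= #|B|)%N by clear -Hlow; lia.
pose s1 := (\sum_(S in Ss F n' r) iS S)%N.
pose s2 := (\sum_(S in Ss F n' r) (iS S * (iS S - 1)))%N.
have Z : 0 <= s2%:R - (p%:R + 1) * s1%:R + (p%:R + 1) * X%:R :> rat.
  have : 0 <= \sum_(S in Ss F n' r) ((iS S)%:R - 1) * ((iS S)%:R - 1 - p%:R) :> rat.
    by apply: sumr_ge0 => S hS; apply: term_ge0 => //; apply: Smod.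
  rewrite (eq_bigr (fun S => ((iS S * (iS S - 1))%N%:R - (p%:R+1) * (iS S)%:R + (p%:R + 1)) : rat)); last first.
    by move=> S _; rewrite natm1; ring.
  suff -> : \sum_(S in Ss F n' r) ((iS S * (iS S - 1))%N%:R - (p%:R+1) * (iS S)%:R + (p%:R + 1) : rat)
      = s2%:R - (p%:R + 1) * s1%:R + (p%:R + 1) * X%:R by [].
  rewrite big_split sumrB -mulr_sumr sumr_const /s1 /s2 !natr_sum mulr_natr.
  by [].
have E1r : (X%:R * (D%:R * (D%:R - 1)) = T%:R * (T%:R - 1) * c%:R :> rat).
  by have := congr1 (fun x : nat => x%:R : rat) E1; rewrite /= natrM natm1 natrM natm1.
have E2r : (s1%:R * (D%:R - 1) = #|B|%:R * (T%:R - 1) * c%:R :> rat).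
  have := congr1 (fun x : nat => x%:R : rat) E2.
  by rewrite /= !natrM !natrB //; first [exact: T1 | exact: ltnW D2].
have E3r : (s2%:R = #|B|%:R * (#|B|%:R - 1) * c%:R :> rat).
  by have := congr1 (fun x : nat => x%:R : rat) E3; rewrite /= natrM natm1.
have DR : (1 : rat) < D%:R by rewrite ltr1n.
have cR : (0 : rat) < c%:R by rewrite ltr0n.
set bR := (#|B|%:R : rat) in E2r E3r *.
set DR' := (D%:R : rat) in E1r E2r DR *.
set TR := (T%:R : rat) in E1r E2r E3r *.
set cR' := (c%:R : rat) in E1r E2r E3r cR *.
have G : 0 <= bR * (bR - 1) * DR' * (DR' - 1) - (p%:R + 1) * bR * (TR - 1) * DR'
                + (p%:R + 1) * TR * (TR - 1).
  have hD1 : DR' - 1 != 0 by rewrite subr_eq0 gt_eqF.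
  have hD0 : DR' != 0 by rewrite gt_eqF //; apply: lt_trans DR.
  have eX : (X%:R : rat) = TR * (TR - 1) * cR' / (DR' * (DR' - 1)).
    by rewrite -E1r mulfK // mulf_neq0.
  have eS1 : (s1%:R : rat) = bR * (TR - 1) * cR' / (DR' - 1).
    by rewrite -E2r mulfK.
  rewrite eX eS1 E3r in Z.
  have : 0 <= cR' * (bR * (bR - 1) * DR' * (DR' - 1) - (p%:R + 1) * bR * (TR - 1) * DR'
                + (p%:R + 1) * TR * (TR - 1)).
    have -> : cR' * (bR * (bR - 1) * DR' * (DR' - 1) - (p%:R + 1) * bR * (TR - 1) * DR'
                + (p%:R + 1) * TR * (TR - 1)) =
      (DR' * (DR' - 1)) * (bR * (bR - 1) * cR' - (p%:R + 1) * (bR * (TR - 1) * cR' / (DR' - 1)) +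
       (p%:R + 1) * (TR * (TR - 1) * cR' / (DR' * (DR' - 1)))).
      by field; rewrite hD1 hD0.
    apply: mulr_ge0 => //; apply: mulr_ge0; lra.
  by rewrite pmulr_rge0.
have qR7 : (7 : rat) <= q%:R by rewrite ler_nat.
have RR : (49 : rat) <= (q ^ r)%:R by rewrite ler_nat.
have Q1 : (1 : rat) <= (q ^ k)%:R by rewrite ler1n.
have eDr : DR' * (q%:R - 1) = (q ^ r)%:R - 1.
  have := congr1 (fun x : nat => x%:R : rat) eD; rewrite /= natrM !natrB; first by [].
  1,2: (clear -q7 qr49 qk1; nia).
have eTr : TR * (q%:R - 1) = (q ^ r)%:R * (q ^ k)%:R - 1.
  have := congr1 (fun x : nat => x%:R : rat) eT; rewrite /= natrM !natrB ?natrM; first by [].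
  1,2: (clear -q7 qr49 qk1; nia).
have hA : (q ^ k)%:R * (DR' - 1) <= TR - 1.
  rewrite -(ler_pM2r (_ : (0:rat) < q%:R - 1)); last lra.
  have -> : (q ^ k)%:R * (DR' - 1) * (q%:R - 1) =
     (q ^ k)%:R * (DR' * (q%:R - 1)) - (q ^ k)%:R * (q%:R - 1) by ring.
  have -> : (TR - 1) * (q%:R - 1) = TR * (q%:R - 1) - (q%:R - 1) by ring.
  rewrite eDr eTr.
  have : 0 <= q%:R * ((q ^ k)%:R - 1) :> rat by apply: mulr_ge0; lra.
  lra.
have hC : 48 * TR <= 49 * (q ^ k)%:R * DR'.
  rewrite -(ler_pM2r (_ : (0:rat) < q%:R - 1)); last lra.
  have -> : 48 * TR * (q%:R - 1) = 48 * (TR * (q%:R - 1)) by ring.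
  have -> : 49 * (q ^ k)%:R * DR' * (q%:R - 1) = 49 * (q ^ k)%:R * (DR' * (q%:R - 1)) by ring.
  rewrite eDr eTr.
  have : 0 <= (q ^ k)%:R * ((q ^ r)%:R - 49) :> rat by apply: mulr_ge0; lra.
  lra.
have b2 : bR < 2 * (q ^ k)%:R.
  have : bR < (2 * q ^ k)%N%:R by rewrite ltr_nat.
  by rewrite natrM.
have p7R : (7 : rat) <= p%:R by rewrite ler_nat.
exact: (@fin2 bR (q ^ k)%:R p%:R DR' TR p7R Q1 DR (ler0n _ _) hA hC b2 G).
Qed.
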